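(* Let $m,n\ge1$ and let $r$ be an integer with $\frac{\min\{m,n\}+2}{2}<r<\min\{m,n\}$. Then $\mathrm{Hrk}_r^\circ(m,n)=2$.
   Context: Work over $\mathbb{C}$. For projective varieties $X,Y\subset\mathbb{P}^N$, $X\star Y$ is the Zariski closure of the set of entrywise products $p\star q=[p_0q_0:\dots:p_Nq_N]$ ($p\in X,q\in Y$, defined); $X^{\star1}=X$, $X^{\star s}=X\star X^{\star(s-1)}$. $X_r\subset\mathbb{P}(\mathrm{Mat}_{m,n})$ is the variety of $m\times n$ matrices of rank at most $r$, and $\mathrm{Hrk}_r^\circ(m,n)=\min\{s\mid X_r^{\star s}=\mathbb{P}(\mathrm{Mat}_{m,n})\}$. *)

(* Defs.v *)
From HB Require Import structures.
From mathcomp Require Import all_boot all_order all_algebra.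
Set Implicit Arguments. Unset Strict Implicit. Unset Printing Implicit Defensive.
Import Order.TTheory GRing.Theory Num.Theory.
Local Open Scope ring_scope.

(* Projective subvarieties of P(Mat_{m,n}) are represented by their affine
   cones: scaling-invariant subsets of the space of m x n matrices over C. *)

Inductive mpoly (C : Type) (m n : nat) : Type :=
| PConst of C
| PVar of 'I_m & 'I_n
| PAdd of mpoly C m n & mpoly C m n
| PMul of mpoly C m n & mpoly C m n.

Fixpoint peval (C : numClosedFieldType) (m n : nat) (p : mpoly C m n)
  (A : 'M[C]_(m, n)) : C :=
  match p with
  | PConst c => c
  | PVar i j => A i j
  | PAdd p q => peval p A + peval q A
  | PMul p q => peval p A * peval q A
  end.

Definition zariski_closure (C : numClosedFieldType) (m n : nat)
  (S : 'M[C]_(m, n) -> Prop) : 'M[C]_(m, n) -> Prop :=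
  fun A => forall p : mpoly C m n,
    (forall B, S B -> peval p B = 0) -> peval p A = 0.

Definition hprod (C : numClosedFieldType) (m n : nat) (A B : 'M[C]_(m, n)) :
  'M[C]_(m, n) := \matrix_(i, j) (A i j * B i j).

Definition hadamard (C : numClosedFieldType) (m n : nat)
  (X Y : 'M[C]_(m, n) -> Prop) : 'M[C]_(m, n) -> Prop :=
  zariski_closure (fun M => exists A B, [/\ X A, Y B & M = hprod A B]).

Fixpoint hpow (C : numClosedFieldType) (m n : nat)
  (X : 'M[C]_(m, n) -> Prop) (s : nat) : 'M[C]_(m, n) -> Prop :=
  match s with
  | 0%N => X
  | 1%N => X
  | s'.+1 => hadamard X (hpow X s')
  end.

Definition rank_le (C : numClosedFieldType) (m n r : nat) : 'M[C]_(m, n) -> Prop :=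
  fun A => (\rank A <= r)%N.

Definition is_full (C : numClosedFieldType) (m n : nat)
  (X : 'M[C]_(m, n) -> Prop) : Prop := forall A, X A.

Definition is_Hrk (C : numClosedFieldType) (m n r k : nat) : Prop :=
  [/\ (1 <= k)%N, is_full (hpow (@rank_le C m n r) k)
    & forall s, (1 <= s)%N -> is_full (hpow (@rank_le C m n r) s) -> (k <= s)%N].

(* Main.v *)
Require Import Defs.
From mathcomp Require Import all_boot all_order all_algebra.
From mathcomp Require Import zify.
Set Implicit Arguments. Unset Strict Implicit. Unset Printing Implicit Defensive.
Import Order.TTheory GRing.Theory Num.Theory.
Local Open Scope ring_scope.

Lemma decomp (C : numClosedFieldType) (p q r : nat) (A : 'M[C]_(p.+1, q)) :
  (p.+1 + 2 <= 2 * r)%N -> (r <= p.+1)%N ->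
  exists B D : 'M[C]_(p.+1, q),
    [/\ (\rank B <= r)%N, (\rank D <= r)%N & A = hprod B D].
Proof.
move=> h1 h2.
set a := r.-1. set b := (p.+1 - a)%N.
have ha : (a.+1 <= r)%N by rewrite /a; lia.
have hb : (b.+1 <= r)%N by rewrite /b /a; lia.
pose Y1 : 'M[C]_(a.+1, q) := \matrix_(k, j) if (k < a)%N then A (inord k) j else 1.
pose f (i : 'I_p.+1) : 'I_a.+1 := if (i < a)%N then inord i else ord_max.
pose Y2 : 'M[C]_(b.+1, q) := \matrix_(k, j) if (k < b)%N then A (inord (k + a)) j else 1.
pose g (i : 'I_p.+1) : 'I_b.+1 := if (i < a)%N then ord_max else inord (i - a).
exists (rowsub f Y1), (rowsub g Y2); split.
- rewrite rowsubE; apply: leq_trans (mxrankM_maxr _ _) _.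
  exact: leq_trans (rank_leq_row _) ha.
- rewrite rowsubE; apply: leq_trans (mxrankM_maxr _ _) _.
  exact: leq_trans (rank_leq_row _) hb.
apply/matrixP => i j; rewrite /hprod !mxE /f /g.
have hi' := ltn_ord i.
case: (ltnP i a) => hi.
- have hia : (i < a.+1)%N by lia.
  rewrite /= inordK // hi ltnn mulr1.
  by congr (A _ j); apply: val_inj; rewrite /= !inordK //; lia.
- have hb' : (i - a < b.+1)%N by rewrite /b; lia.
  rewrite /= inordK // ltnn mul1r.
  have -> : (i - a < b)%N by rewrite /b; lia.
  congr (A _ j); apply: val_inj; rewrite /= !inordK //; lia.
Qed.

Lemma decomp_all (C : numClosedFieldType) (m n r : nat) (A : 'M[C]_(m, n)) :
  (1 <= m)%N -> (1 <= n)%N ->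
  (minn m n + 2 < 2 * r)%N -> (r < minn m n)%N ->
  exists B D : 'M[C]_(m, n),
    [/\ (\rank B <= r)%N, (\rank D <= r)%N & A = hprod B D].
Proof.
move=> hm hn h1 h2.
case: (leqP m n) => hmn.
- case: m A hm hmn h1 h2 => [//|p] A _ hmn h1 h2.
  apply: decomp; lia.
- case: n A hn hmn h1 h2 => [//|p] A _ hmn h1 h2.
  have [B [D [hB hD hE]]] := @decomp C p m r A^T ltac:(lia) ltac:(lia).
  exists B^T, D^T; rewrite !mxrank_tr; split => //.
  apply/matrixP => i j; rewrite /hprod !mxE.
  have := congr1 (fun M : 'M_(_,_) => M j i) hE; rewrite /hprod !mxE => ->.
  by [].
Qed.

Theorem mainTheorem14 (C : numClosedFieldType) (m n r : nat) :
  (1 <= m)%N -> (1 <= n)%N ->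
  (minn m n + 2 < 2 * r)%N -> (r < minn m n)%N ->
  is_Hrk C m n r 2.
Proof.
move=> hm hn h1 h2; split => //.
- move=> A P HP; apply: HP.
  have [B [D [hB hD hE]]] := decomp_all A hm hn h1 h2.
  by exists B, D.
- case=> [//|[|s]] _ // Hf.
  have := Hf (pid_mx (minn m n)); rewrite /= /rank_le rank_pid_mx ?geq_minl ?geq_minr //.
  lia.
Qed.
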